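(* Let $R_1\leftarrow R_{12}\to R_2$ be a correspondence in $\mathrm{DGRings}^{0,-1}$. It is admissible if and only if the correspondence of underlying groupoids $\mathrm{Cone}(R_1)\leftarrow\mathrm{Cone}(R_{12})\to\mathrm{Cone}(R_2)$ in $\mathrm{Cats}'$ is admissible in the categorical sense.
   Context: Rings are commutative and unital. $\mathrm{DGRings}^{0,-1}$ is the category of commutative DG rings $R$ with $R^i=0$ for $i\ne0,-1$. Equivalently, such $R$ is a ring $C=R^0$, a $C$-module $I=R^{-1}$ and a $C$-linear $d:I\to C$ with $d(x)y=d(y)x$. Quasi-isomorphisms are morphisms inducing isomorphisms on $\ker d$ and $\operatorname{coker} d$. A correspondence $R_1\xleftarrow{f}R_{12}\xrightarrow{g}R_2$ in $\mathrm{DGRings}^{0,-1}$ is admissible if $f$ is a quasi-isomorphism and $R_{12}^{-1}\to R_1^{-1}\times R_2^{-1}$ is an isomorphism. $\mathrm{Cone}(R)$ is the groupoid whose set of objects is $C$ and whose morphisms are the pairs $(c,x)\in C\times I$, the pair being a morphism $c\to c+dx$. Composition is $(c+dx,y)\circ(c,x)=(c,x+y)$. A morphism of $\mathrm{DGRings}^{0,-1}$ induces a functor in the obvious way. $\mathrm{Cats}'$ is the naive 1-category of small categories, with functors on the nose. A correspondence $\mathcal{C}_1\leftarrow\mathcal{C}_{12}\to\mathcal{C}_2$ in $\mathrm{Cats}'$ is admissible in the categorical sense if it is isomorphic, as a correspondence (isomorphism of middle terms commuting on the nose with both legs), to $\mathcal{C}_1\leftarrow\mathrm{Graph}_\Phi\to\mathcal{C}_2$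 for some functor $\Phi:\mathcal{C}_1\to\mathcal{C}_2$. Here $\mathrm{Graph}_\Phi$ is the category of triples $(c_1,c_2,\psi:\Phi(c_1)\xrightarrow{\sim}c_2)$ with the projection functors. *)

(* Defs.v *)
From HB Require Import structures.
From mathcomp Require Import all_boot all_algebra.
From Stdlib Require Import ProofIrrelevance FunctionalExtensionality.
Set Implicit Arguments. Unset Strict Implicit. Unset Printing Implicit Defensive.
Import GRing.Theory.
Local Open Scope ring_scope.

Record category := Category {
  ob : Type;
  hom : ob -> ob -> Type;
  idm : forall a, hom a a;
  comp : forall a b c, hom b c -> hom a b -> hom a c;
  comp_id_l : forall a b (f : hom a b), comp (idm b) f = f;
  comp_id_r : forall a b (f : hom a b), comp f (idm a) = f;
  comp_assoc : forall a b c d (f : hom a b) (g : hom b c) (h : hom c d),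
      comp h (comp g f) = comp (comp h g) f }.
Arguments hom : clear implicits.
Arguments idm {C} a : rename.
Arguments comp {C a b c} g f : rename.

Record functor (C D : category) := Functor {
  fob : ob C -> ob D;
  fmap : forall a b, hom C a b -> hom D (fob a) (fob b);
  fmap_id : forall a, fmap (idm a) = idm (fob a);
  fmap_comp : forall a b c (f : hom C a b) (g : hom C b c),
      fmap (comp g f) = comp (fmap g) (fmap f) }.
Arguments fmap {C D} F {a b} f : rename.

Definition functor_id (C : category) : functor C C.
Proof.
refine (@Functor C C (fun a => a) (fun a b f => f) _ _); by [].
Defined.

Definition functor_comp (C D E : category) (G : functor D E) (F : functor C D)
  : functor C E.
Proof.
refine (@Functor C E (fun a => fob G (fob F a)) (fun a b f => fmap G (fmap F f)) _ _).
- by move=> a; rewrite fmap_id fmap_id.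
- by move=> a b c f g; rewrite fmap_comp fmap_comp.
Defined.

Definition cat_iso (C D : category) (H : functor C D) : Prop :=
  exists K : functor D C,
    functor_comp K H = functor_id C /\ functor_comp H K = functor_id D.

Definition is_iso (C : category) (a b : ob C) (f : hom C a b) : Prop :=
  exists g : hom C b a, comp g f = idm a /\ comp f g = idm b.

Section Graph.
Variables (C1 C2 : category) (Phi : functor C1 C2).

Record graph_ob := GOb {
  go1 : ob C1; go2 : ob C2;
  gpsi : hom C2 (fob Phi go1) go2;
  gpsi_iso : is_iso gpsi }.

Record graph_hom (x y : graph_ob) := GHom {
  gh1 : hom C1 (go1 x) (go1 y);
  gh2 : hom C2 (go2 x) (go2 y);
  gh_sq : comp gh2 (gpsi x) = comp (gpsi y) (fmap Phi gh1) }.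

Lemma graph_hom_eq (x y : graph_ob) (f g : graph_hom x y) :
  gh1 f = gh1 g -> gh2 f = gh2 g -> f = g.
Proof.
case: f g => f1 f2 fs [g1 g2 gs] /= e1 e2; subst.
by rewrite (proof_irrelevance _ fs gs).
Qed.

Lemma graph_id_sq (x : graph_ob) :
  comp (idm (go2 x)) (gpsi x) = comp (gpsi x) (fmap Phi (idm (go1 x))).
Proof. by rewrite fmap_id comp_id_l comp_id_r. Qed.

Definition graph_idm (x : graph_ob) : graph_hom x x :=
  GHom (graph_id_sq x).

Lemma graph_comp_sq (x y z : graph_ob) (g : graph_hom y z) (f : graph_hom x y) :
  comp (comp (gh2 g) (gh2 f)) (gpsi x)
  = comp (gpsi z) (fmap Phi (comp (gh1 g) (gh1 f))).
Proof.
rewrite -comp_assoc gh_sq comp_assoc gh_sq -comp_assoc fmap_comp.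
by [].
Qed.

Definition graph_comp (x y z : graph_ob) (g : graph_hom y z) (f : graph_hom x y)
  : graph_hom x z := GHom (graph_comp_sq g f).

Definition graph : category.
Proof.
refine (@Category graph_ob graph_hom graph_idm graph_comp _ _ _).
- by move=> a b f; apply: graph_hom_eq; rewrite /= comp_id_l.
- by move=> a b f; apply: graph_hom_eq; rewrite /= comp_id_r.
- by move=> a b c d f g h; apply: graph_hom_eq; rewrite /= comp_assoc.
Defined.

Definition graph_pr1 : functor graph C1.
Proof.
refine (@Functor graph C1 (@go1) (fun a b f => gh1 f) _ _); by [].
Defined.

Definition graph_pr2 : functor graph C2.
Proof.
refine (@Functor graph C2 (@go2) (fun a b f => gh2 f) _ _); by [].
Defined.
End Graph.

Definition cat_admissible (C1 C12 C2 : category)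
  (F : functor C12 C1) (G : functor C12 C2) : Prop :=
  exists (Phi : functor C1 C2) (H : functor C12 (graph Phi)),
    cat_iso H /\ functor_comp (graph_pr1 Phi) H = F
              /\ functor_comp (graph_pr2 Phi) H = G.

(* R^0 = C, R^{-1} = I, d : I -> C C-linear with d(x) y = d(y) x *)
Record dgring := DGRing {
  dgC : comPzRingType;
  dgI : lmodType dgC;
  dgd : dgI -> dgC;
  dgd_lin : forall (c : dgC) (x y : dgI), dgd (c *: x + y) = c * dgd x + dgd y;
  dgd_sym : forall x y : dgI, dgd x *: y = dgd y *: x }.
Arguments dgd : clear implicits.

Record dghom (R S : dgring) := DGHom {
  f0 : {rmorphism dgC R -> dgC S};
  f1 : dgI R -> dgI S;
  f1_lin : forall (c : dgC R) (x y : dgI R), f1 (c *: x + y) = f0 c *: f1 x + f1 y;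
  f_d : forall x : dgI R, dgd S (f1 x) = f0 (dgd R x) }.

Lemma dgd0 (R : dgring) : dgd R 0 = 0.
Proof.
have := dgd_lin (1 : dgC R) 0 0; rewrite scale1r addr0 mul1r.
by move=> /(congr1 (fun z => z - dgd R 0)); rewrite subrr addrK => /esym.
Qed.

Lemma dgdD (R : dgring) (x y : dgI R) : dgd R (x + y) = dgd R x + dgd R y.
Proof. by have := dgd_lin 1 x y; rewrite scale1r mul1r. Qed.

Lemma f1_0 (R S : dgring) (f : dghom R S) : f1 f 0 = 0.
Proof.
have := f1_lin f 1 0 0; rewrite scale1r addr0 rmorph1 scale1r.
by move=> /(congr1 (fun z => z - f1 f 0)); rewrite subrr addrK => /esym.
Qed.

(* the map induced on H^{-1} = ker d *)
Definition ker_map (R S : dgring) (f : dghom R S)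
  (x : {x : dgI R | dgd R x == 0}) : {x : dgI S | dgd S x == 0} :=
  exist (fun y : dgI S => dgd S y == 0) (f1 f (val x))
    (ltac:(by rewrite /= f_d (eqP (valP x)) rmorph0)).

(* quasi-isomorphism: isomorphisms on ker d and on coker d = C / d(I).
   The induced map on coker d is written out: injectivity and surjectivity
   of the map  c mod d(I) |-> f0 c mod d(I'). *)
Definition quasi_iso (R S : dgring) (f : dghom R S) : Prop :=
  bijective (ker_map f)
  /\ (forall c1 c2 : dgC R, (exists x' : dgI S, f0 f c1 = f0 f c2 + dgd S x') ->
        exists x : dgI R, c1 = c2 + dgd R x)
  /\ (forall c' : dgC S, exists (c : dgC R) (x' : dgI S), c' = f0 f c + dgd S x').

Definition dg_admissible (R1 R12 R2 : dgring) (f : dghom R12 R1) (g : dghom R12 R2)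
  : Prop :=
  quasi_iso f /\ bijective (fun x : dgI R12 => (f1 f x, f1 g x)).

Section Cone.
Variable R : dgring.

Definition cone_hom (c c' : dgC R) := {x : dgI R | c' == c + dgd R x}.

Definition cone_idm (c : dgC R) : cone_hom c c :=
  exist (fun x : dgI R => c == c + dgd R x) 0 (ltac:(by rewrite /= dgd0 addr0)).

Lemma cone_comp_proof (a b c : dgC R) (g : cone_hom b c) (f : cone_hom a b) :
  c == a + dgd R (val f + val g).
Proof.
apply/eqP; rewrite dgdD addrA.
have eg : c = b + dgd R (val g) by apply/eqP; exact: (valP g).
have ef : b = a + dgd R (val f) by apply/eqP; exact: (valP f).
transitivity (b + dgd R (val g)); first exact: eg.
congr (_ + _); exact: ef.
Qed.

Definition cone_comp (a b c : dgC R) (g : cone_hom b c) (f : cone_hom a b)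
  : cone_hom a c :=
  exist (fun x : dgI R => c == a + dgd R x) (val f + val g)
    (cone_comp_proof g f).

Definition cone : category.
Proof.
refine (@Category (dgC R) cone_hom cone_idm cone_comp _ _ _).
- by move=> a b f; apply: val_inj; rewrite /= addr0.
- by move=> a b f; apply: val_inj; rewrite /= add0r.
- by move=> a b c d f g h; apply: val_inj; rewrite /= addrA.
Defined.
End Cone.

Lemma cone_fmap_proof (R S : dgring) (f : dghom R S) (a b : dgC R)
  (x : cone_hom a b) : f0 f b == f0 f a + dgd S (f1 f (val x)).
Proof.
apply/eqP; rewrite f_d -rmorphD.
exact: (congr1 (f0 f) (eqP (valP x))).
Qed.

Definition cone_fmap (R S : dgring) (f : dghom R S) (a b : dgC R)
  (x : cone_hom a b) : cone_hom (f0 f a) (f0 f b) :=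
  exist (fun y : dgI S => f0 f b == f0 f a + dgd S y) (f1 f (val x))
    (cone_fmap_proof f x).

Definition cone_functor (R S : dgring) (f : dghom R S) : functor (cone R) (cone S).
Proof.
refine (@Functor (cone R) (cone S) (f0 f) (@cone_fmap R S f) _ _).
- by move=> a; apply: val_inj; rewrite /= f1_0.
- move=> a b c x y; apply: val_inj => /=.
  by have := f1_lin f 1 (val x) (val y); rewrite !scale1r rmorph1 scale1r.
Defined.

(* Main.v *)
Require Import Defs.
From mathcomp Require Import all_boot all_algebra.
From mathcomp Require Import ring.
From Stdlib Require Import ProofIrrelevance FunctionalExtensionality ClassicalEpsilon IndefiniteDescription.
Set Implicit Arguments. Unset Strict Implicit. Unset Printing Implicit Defensive.
Import GRing.Theory.
Local Open Scope ring_scope.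


Definition hcast (C : category) (a b a' b' : ob C) (ea : a = a') (eb : b = b')
  (h : Defs.hom C a b) : Defs.hom C a' b' :=
  match ea in _ = a' return Defs.hom C a' b' with
  | erefl => match eb in _ = b' return Defs.hom C a b' with erefl => h end end.

Lemma functor_eq (C D : category) (F G : functor C D)
  (e : forall a, fob F a = fob G a) :
  (forall a b (h : Defs.hom C a b), hcast (e a) (e b) (fmap F h) = fmap G h) -> F = G.
Proof.
case: F G e => [fo fm fi fc] [go gm gi gc] /= e Hm.
have E : fo = go := functional_extensionality _ _ e.
subst go.
have He : e = (fun a => erefl) by apply: functional_extensionality_dep => a; apply: proof_irrelevance.
subst e.
have Em : fm = gm.
  apply: functional_extensionality_dep => a; apply: functional_extensionality_dep => b.
  apply: functional_extensionality_dep => h; exact: Hm.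
subst gm. f_equal; apply: proof_irrelevance.
Qed.

Lemma fmap_proj (C D : category) (T : Type) (P : forall a b, Defs.hom D a b -> T)
  (F G : functor C D) : F = G -> forall a b (h : Defs.hom C a b),
  P _ _ (fmap F h) = P _ _ (fmap G h).
Proof. by move=> ->. Qed.

Lemma fob_proj (C D : category) (F G : functor C D) : F = G -> forall a, fob F a = fob G a.
Proof. by move=> ->. Qed.

Lemma cone_hom_eq (R : dgring) (a b : dgC R) (x y : cone_hom a b) :
  proj1_sig x = proj1_sig y -> x = y.
Proof.
case: x y => x px [y py] /= e; subst y; f_equal; apply: proof_irrelevance.
Qed.

Lemma hcast_cone (R : dgring) (a b a' b' : ob (cone R)) (ea : a = a') (eb : b = b')
  (h : Defs.hom (cone R) a b) : proj1_sig (hcast ea eb h) = proj1_sig h.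
Proof. by destruct ea, eb. Qed.

Lemma hcast_graph (R1 R2 : dgring) (Phi : functor (cone R1) (cone R2))
  (a b a' b' : ob (graph Phi)) (ea : a = a') (eb : b = b')
  (h : Defs.hom (graph Phi) a b) :
  proj1_sig (gh1 (hcast ea eb h)) = proj1_sig (gh1 h) /\
  proj1_sig (gh2 (hcast ea eb h)) = proj1_sig (gh2 h).
Proof. by destruct ea, eb. Qed.

Lemma graph_ob_eq (R1 R2 : dgring) (Phi : functor (cone R1) (cone R2))
  (x y : graph_ob Phi) : go1 x = go1 y -> go2 x = go2 y ->
  proj1_sig (gpsi x) = proj1_sig (gpsi y) -> x = y.
Proof.
case: x y => a b p pi [a' b' p' pi'] /= e1 e2; subst a' b' => e3.
have ep : p = p' by apply: cone_hom_eq.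
subst p'; f_equal; apply: proof_irrelevance.
Qed.

Lemma hom_eq (R : dgring) (a b : ob (cone R)) (h : Defs.hom (cone R) a b) :
  b = a + dgd R (proj1_sig h).
Proof. by apply/eqP; exact: (proj2_sig h). Qed.

Lemma cone_iso (R : dgring) (a b : ob (cone R)) (h : Defs.hom (cone R) a b) : is_iso h.
Proof.
have p : a == b + dgd R (- proj1_sig h).
  apply/eqP; have := hom_eq h; move: (proj1_sig h) => x ->.
  by rewrite -addrA -dgdD subrr dgd0 addr0.
exists (exist (fun x : dgI R => a == b + dgd R x) _ p : Defs.hom (cone R) b a); split; apply: cone_hom_eq => /=; by rewrite ?subrr ?addNr.
Qed.

Lemma dgdN (R : dgring) (x : dgI R) : dgd R (- x) = - dgd R x.
Proof. by apply/eqP; rewrite -addr_eq0 -dgdD addNr dgd0. Qed.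

Lemma f1D (R S : dgring) (f : dghom R S) x y : f1 f (x + y) = f1 f x + f1 f y.
Proof. by have := f1_lin f 1 x y; rewrite scale1r rmorph1 scale1r. Qed.

Lemma f1N (R S : dgring) (f : dghom R S) x : f1 f (- x) = - f1 f x.
Proof. by apply/eqP; rewrite -addr_eq0 -f1D addNr f1_0. Qed.



Lemma fmap_val0 (R1 R2 : dgring) (Phi : functor (cone R1) (cone R2)) (a b : ob (cone R1))
  (h : Defs.hom (cone R1) a b) : proj1_sig h = 0 -> proj1_sig (fmap Phi h) = 0.
Proof.
move=> h0; have eb := hom_eq h; rewrite h0 dgd0 addr0 in eb; subst b.
have -> : h = idm a by apply: cone_hom_eq.
by rewrite fmap_id.
Qed.

Lemma gsq (R1 R2 : dgring) (Phi : functor (cone R1) (cone R2)) (x y : graph_ob Phi)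
  (m : graph_hom x y) : proj1_sig (gpsi x) + proj1_sig (gh2 m)
   = proj1_sig (fmap Phi (gh1 m)) + proj1_sig (gpsi y).
Proof. exact: (congr1 (@proj1_sig _ _) (gh_sq m)). Qed.




Lemma inj_surj_bij (A B : Type) (h : A -> B) :
  injective h -> (forall y, exists x, h x = y) -> bijective h.
Proof.
move=> hi hs; exists (fun y => proj1_sig (constructive_indefinite_description _ (hs y))).
  by move=> x; apply: hi; exact: (proj2_sig (constructive_indefinite_description _ (hs (h x)))).
by move=> y; exact: (proj2_sig (constructive_indefinite_description _ (hs y))).
Qed.

Lemma backward (R1 R12 R2 : dgring) (f : dghom R12 R1) (g : dghom R12 R2)
  (Phi : functor (cone R1) (cone R2)) (H : functor (cone R12) (graph Phi))
  (K : functor (graph Phi) (cone R12))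
  (KH : functor_comp K H = functor_id _) (HK : functor_comp H K = functor_id _)
  (E1 : functor_comp (graph_pr1 Phi) H = cone_functor f)
  (E2 : functor_comp (graph_pr2 Phi) H = cone_functor g) : dg_admissible f g.
Proof.
have ob1 c : go1 (fob H c) = f0 f c := fob_proj E1 c.
have ob2 c : go2 (fob H c) = f0 g c := fob_proj E2 c.
have mor1 a b (x : Defs.hom (cone R12) a b) :
    proj1_sig (gh1 (fmap H x)) = f1 f (proj1_sig x).
  exact: (fmap_proj (fun a b (h : Defs.hom (cone R1) a b) => proj1_sig h) E1 x).
have mor2 a b (x : Defs.hom (cone R12) a b) :
    proj1_sig (gh2 (fmap H x)) = f1 g (proj1_sig x).
  exact: (fmap_proj (fun a b (h : Defs.hom (cone R2) a b) => proj1_sig h) E2 x).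
have obKH c : fob K (fob H c) = c := fob_proj KH c.
have morKH a b (x : Defs.hom (cone R12) a b) :
    proj1_sig (fmap K (fmap H x)) = proj1_sig x.
  exact: (fmap_proj (fun a b (h : Defs.hom (cone R12) a b) => proj1_sig h) KH x).
have obHK o : fob H (fob K o) = o := fob_proj HK o.
have morHK1 a b (m : Defs.hom (graph Phi) a b) :
    proj1_sig (gh1 (fmap H (fmap K m))) = proj1_sig (gh1 m).
  exact: (fmap_proj (fun a b (h : Defs.hom (graph Phi) a b) => proj1_sig (gh1 h)) HK m).
have morHK2 a b (m : Defs.hom (graph Phi) a b) :
    proj1_sig (gh2 (fmap H (fmap K m))) = proj1_sig (gh2 m).
  exact: (fmap_proj (fun a b (h : Defs.hom (graph Phi) a b) => proj1_sig (gh2 h)) HK m).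
have faith a b (h h' : Defs.hom (cone R12) a b) :
    f1 f (proj1_sig h) = f1 f (proj1_sig h') ->
    f1 g (proj1_sig h) = f1 g (proj1_sig h') -> proj1_sig h = proj1_sig h'.
  move=> e1 e2; rewrite -morKH -[RHS]morKH.
  have -> : fmap H h = fmap H h' by apply: graph_hom_eq; apply: cone_hom_eq; rewrite ?mor1 ?mor2.
  by [].
have full a (o : graph_ob Phi) (m : Defs.hom (graph Phi) (fob H a) o) :
    exists x, fob K o = a + dgd R12 x /\ f1 f x = proj1_sig (gh1 m)
                 /\ f1 g x = proj1_sig (gh2 m).
  rewrite -morHK1 -morHK2 mor1 mor2.
  move: (proj1_sig (fmap K m)) (hom_eq (fmap K m)) => x ex.
  by exists x; rewrite ex obKH.

split; first (split; last split).
- apply: inj_surj_bij.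
  + move=> [x px] [x' px'] /(congr1 (@proj1_sig _ _)) /= e.
    have p0 : (0 : dgC R12) == 0 + dgd R12 x by rewrite (eqP px) addr0.
    have p0' : (0 : dgC R12) == 0 + dgd R12 x' by rewrite (eqP px') addr0.
    pose l := (exist _ x p0 : Defs.hom (cone R12) 0 0).
    pose l' := (exist _ x' p0' : Defs.hom (cone R12) 0 0).
    have e1 : gh1 (fmap H l) = gh1 (fmap H l') by apply: cone_hom_eq; rewrite !mor1.
    have s1 := gsq (fmap H l); have s2 := gsq (fmap H l').
    rewrite e1 -s2 in s1; move/addrI: s1; rewrite !mor2 /= => e2.
    have := faith _ _ l l' e e2 => /= exx'; subst x'.
    by f_equal; apply: proof_irrelevance.
  + move=> [y py]; set o := fob H 0.
    have p1 : go1 o == go1 o + dgd R1 y by rewrite (eqP py) addr0.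
    pose h1 := (exist _ y p1 : Defs.hom (cone R1) (go1 o) (go1 o)).
    have p2 : go2 o == go2 o + dgd R2 (proj1_sig (fmap Phi h1)).
      have := hom_eq (fmap Phi h1); move: (proj1_sig (fmap Phi h1)) => v.
      move/(congr1 (fun z => z - fob Phi (go1 o))); rewrite subrr addrC addKr => <-.
      by rewrite addr0.
    pose h2 := (exist (fun v : dgI R2 => go2 o == go2 o + dgd R2 v) _ p2 : Defs.hom (cone R2) (go2 o) (go2 o)).
    have sq : Defs.comp h2 (gpsi o) = Defs.comp (gpsi o) (fmap Phi h1).
      by apply: cone_hom_eq; rewrite /= addrC.
    have [x [ex [fx gx]]] := full 0 o (GHom sq).
    have px : dgd R12 x == 0.
      by move: ex; rewrite /o obKH add0r => <-.
    exists (exist _ x px); apply: eq_sig_hprop; [move=> ? ? ?; apply: proof_irrelevance | exact: fx].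
- move=> c1 c2 [x' ex'].
  set o1 := fob H c1; set o2 := fob H c2.
  have p1 : go1 o1 == go1 o2 + dgd R1 x' by rewrite /o1 /o2 !ob1 ex'.
  pose h1 := (exist _ x' p1 : Defs.hom (cone R1) (go1 o2) (go1 o1)).
  have p2 : go2 o1 == go2 o2 + dgd R2 (proj1_sig (fmap Phi h1) + proj1_sig (gpsi o1)
                                        - proj1_sig (gpsi o2)).
    apply/eqP.
    move: (proj1_sig (fmap Phi h1)) (proj1_sig (gpsi o1)) (proj1_sig (gpsi o2))
      (hom_eq (gpsi o1)) (hom_eq (gpsi o2)) (hom_eq (fmap Phi h1)) => a q1 q2 -> -> ->.
    rewrite !dgdD dgdN; ring.
  pose h2 := (exist (fun v : dgI R2 => go2 o1 == go2 o2 + dgd R2 v) _ p2 : Defs.hom (cone R2) (go2 o2) (go2 o1)).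
  have sq : Defs.comp h2 (gpsi o2) = Defs.comp (gpsi o1) (fmap Phi h1).
    by apply: cone_hom_eq; rewrite /= addrC subrK.
  have [x [ex _]] := full c2 o1 (GHom sq).
  by exists x; move: ex; rewrite /o1 obKH.
- move=> c'.
  pose o := @GOb _ _ Phi c' (fob Phi c') (idm _) (cone_iso _).
  exists (fob K o), 0; rewrite dgd0 addr0 -ob1 obHK //.
- apply: inj_surj_bij.
  + move=> x x' [ef eg].
    pose z := x - x'.
    have fz : f1 f z = 0 by rewrite /z f1D f1N ef subrr.
    have gz : f1 g z = 0 by rewrite /z f1D f1N eg subrr.
    have pz : (0 + dgd R12 z : dgC R12) == 0 + dgd R12 z by [].
    pose h := (exist _ z pz : Defs.hom (cone R12) 0 (0 + dgd R12 z)).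
    have eo : fob H 0 = fob H (0 + dgd R12 z).
      have a1 := hom_eq (gh1 (fmap H h)); have a2 := hom_eq (gh2 (fmap H h)).
      rewrite mor1 fz dgd0 addr0 in a1; rewrite mor2 gz dgd0 addr0 in a2.
      apply: graph_ob_eq => //.
      have := gsq (fmap H h); rewrite mor2 gz addr0 fmap_val0 ?add0r //.
      by rewrite mor1.
    have dz : dgd R12 z = 0.
      by have := congr1 (fob K) eo; rewrite !obKH add0r => <-.
    have pl : (0 : dgC R12) == 0 + dgd R12 z by rewrite dz addr0.
    pose l := (exist _ z pl : Defs.hom (cone R12) 0 0).
    have := faith _ _ l (idm (C := cone R12) _); rewrite /= f1_0 f1_0 => /(_ fz gz) z0.
    by apply/eqP; rewrite -subr_eq0 -/z z0.
  + move=> [y1 y2]; set o0 := fob H 0.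
    have p1 : go1 o0 + dgd R1 y1 == go1 o0 + dgd R1 y1 by [].
    pose h1 := (exist _ y1 p1 : Defs.hom (cone R1) (go1 o0) (go1 o0 + dgd R1 y1)).
    have p2 : go2 o0 + dgd R2 y2 == go2 o0 + dgd R2 y2 by [].
    pose h2 := (exist _ y2 p2 : Defs.hom (cone R2) (go2 o0) (go2 o0 + dgd R2 y2)).
    have pp : go2 o0 + dgd R2 y2 == fob Phi (go1 o0 + dgd R1 y1)
          + dgd R2 (proj1_sig (gpsi o0) + y2 - proj1_sig (fmap Phi h1)).
      apply/eqP.
      move: (proj1_sig (fmap Phi h1)) (proj1_sig (gpsi o0))
        (hom_eq (gpsi o0)) (hom_eq (fmap Phi h1)) => a q0 -> ->.
      rewrite !dgdD dgdN; ring.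
    pose o := @GOb _ _ Phi (go1 o0 + dgd R1 y1) (go2 o0 + dgd R2 y2)
       (exist (fun v : dgI R2 => go2 o0 + dgd R2 y2 == fob Phi (go1 o0 + dgd R1 y1) + dgd R2 v) _ pp) (cone_iso _).
    have sq : Defs.comp h2 (gpsi o0) = Defs.comp (gpsi o) (fmap Phi h1).
      by apply: cone_hom_eq; rewrite /= [RHS]addrC subrK.
    have [x [_ [fx gx]]] := full 0 o (@GHom _ _ Phi o0 o h1 h2 sq).
    by exists x; rewrite fx gx.
Qed.


Section Fwd.
Variables (R1 R12 R2 : dgring) (f : dghom R12 R1) (g : dghom R12 R2).
Hypothesis Adm : dg_admissible f g.

Definition ee (a : dgI R1) (b : dgI R2) : dgI R12 :=
  epsilon (inhabits 0) (fun x => f1 f x = a /\ f1 g x = b).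

Lemma ee_spec a b : f1 f (ee a b) = a /\ f1 g (ee a b) = b.
Proof.
apply: (epsilon_spec (inhabits (0 : dgI R12)) (fun x => f1 f x = a /\ f1 g x = b)).
case: Adm => _ [inv _ K]; exists (inv (a, b)).
by have := K (a, b) => /= [[-> ->]].
Qed.

Lemma ee_uniq x : ee (f1 f x) (f1 g x) = x.
Proof.
case: Adm => _ /bij_inj hi; apply: hi => /=.
by case: (ee_spec (f1 f x) (f1 g x)) => -> ->.
Qed.

Lemma eeD a b a' b' : ee a b + ee a' b' = ee (a + a') (b + b').
Proof.
rewrite -[LHS]ee_uniq !f1D.
by case: (ee_spec a b) => -> ->; case: (ee_spec a' b') => -> ->.
Qed.

Lemma ee00 : ee 0 0 = 0.
Proof. by rewrite -{1}(f1_0 f) -(f1_0 g) ee_uniq. Qed.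

Definition DD a b := dgd R12 (ee a b).

Lemma f0DD a b : f0 f (DD a b) = dgd R1 a.
Proof. by rewrite /DD -f_d; case: (ee_spec a b) => ->. Qed.

Lemma g0DD a b : f0 g (DD a b) = dgd R2 b.
Proof. by rewrite /DD -f_d; case: (ee_spec a b) => _ ->. Qed.

Lemma DDD a b a' b' : DD a b + DD a' b' = DD (a + a') (b + b').
Proof. by rewrite /DD -dgdD eeD. Qed.

Lemma DD00 : DD 0 0 = 0.
Proof. by rewrite /DD ee00 dgd0. Qed.

Lemma DD_U y : DD 0 y = 0 -> y = 0.
Proof.
move=> h; case: Adm => [[/bij_inj hi _] _].
have p : dgd R12 (ee 0 y) == 0 by apply/eqP.
have p0 : dgd R12 0 == 0 by rewrite dgd0.
pose k1 := (exist (fun x => dgd R12 x == 0) _ p).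
pose k0 := (exist (fun x => dgd R12 x == 0) _ p0).
case: (ee_spec 0 y) => e1 e2.
have : k1 = k0.
  apply: hi; apply: eq_sig_hprop => [? ? ?|]; [apply: proof_irrelevance | by rewrite /= e1 f1_0].
move/(congr1 (@proj1_sig _ _)) => /= e0.
by rewrite -e2 e0 f1_0.
Qed.

Lemma DD_U2 a b b' : DD a b = DD a b' -> b = b'.
Proof.
move=> h.
have e : DD a b' = DD a b + DD 0 (b' - b) by rewrite DDD addr0 addrC subrK.
rewrite e -{1}[DD a b]addr0 in h; move/addrI: h => /esym/DD_U.
by move/eqP; rewrite subr_eq0 => /eqP.
Qed.

Lemma DD_E c : f0 f c = 0 -> exists y, c = DD 0 y.
Proof.
move=> hc; case: Adm => [[[inv Kk Kk'] [Hinj _]] _].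
have [x ex] : exists x, c = 0 + dgd R12 x.
  apply: Hinj; exists 0; by rewrite hc rmorph0 dgd0 addr0.
rewrite add0r in ex.
have pk : dgd R1 (f1 f x) == 0 by rewrite f_d -ex hc.
set z := inv (exist (fun x => dgd R1 x == 0) _ pk).
have ez : f1 f (proj1_sig z) = f1 f x.
  by have := Kk' (exist (fun x => dgd R1 x == 0) _ pk) => /(congr1 (@proj1_sig _ _)).
have dz : dgd R12 (proj1_sig z) = 0 by apply/eqP; exact: (proj2_sig z).
exists (f1 g (x - proj1_sig z)).
rewrite /DD -[X in ee X _](subrr (f1 f x)) -{2}ez -f1N -f1D ee_uniq.
by rewrite dgdD dgdN dz subr0.
Qed.

Lemma DD_E2 c c' a : f0 f c' = f0 f c + dgd R1 a -> exists y, c' = c + DD a y.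
Proof.
move=> h.
have [y ey] : exists y, c' - c - DD a 0 = DD 0 y.
  by apply: DD_E; rewrite !rmorphB /= f0DD h; ring.
exists y; rewrite -[a]addr0 -[y]add0r -DDD -ey; ring.
Qed.

Definition ly c c' a := epsilon (inhabits 0) (fun y => c' = c + DD a y).

Lemma ly_spec c c' a : f0 f c' = f0 f c + dgd R1 a -> c' = c + DD a (ly c c' a).
Proof. by move=> h; apply: (epsilon_spec (inhabits (0 : dgI R2)) (fun y => c' = c + DD a y)); apply: DD_E2. Qed.

Lemma ly_uniq c c' a y : c' = c + DD a y -> ly c c' a = y.
Proof.
move=> h; apply: (@DD_U2 a); apply: (@addrI _ c); rewrite -h; apply/esym.
by apply: ly_spec; rewrite h rmorphD f0DD.
Qed.

Definition ss c1 := epsilon (inhabits 0) (fun c => f0 f c = c1).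

Lemma ss_spec c1 : f0 f (ss c1) = c1.
Proof.
apply: (epsilon_spec (inhabits (0 : dgC R12)) (fun c => f0 f c = c1)).
case: Adm => [[_ [_ Hs]] _]; have [c [x ex]] := Hs c1.
by exists (c + DD x 0); rewrite rmorphD f0DD.
Qed.

Lemma Phi_proof (c1 c1' : dgC R1) (h : cone_hom c1 c1') :
  f0 g (ss c1') == f0 g (ss c1) + dgd R2 (ly (ss c1) (ss c1') (proj1_sig h)).
Proof.
apply/eqP; rewrite {1}(@ly_spec (ss c1) (ss c1') (proj1_sig h)).
  by rewrite rmorphD g0DD.
by rewrite !ss_spec; exact: (hom_eq h).
Qed.

Definition Phi_fmap (c1 c1' : ob (cone R1)) (h : Defs.hom (cone R1) c1 c1')
  : Defs.hom (cone R2) (f0 g (ss c1)) (f0 g (ss c1')) :=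
  exist (fun v : dgI R2 => f0 g (ss c1') == f0 g (ss c1) + dgd R2 v) _ (Phi_proof h).

Definition Phi : functor (cone R1) (cone R2).
Proof.
refine (@Functor (cone R1) (cone R2) (fun c1 => f0 g (ss c1)) Phi_fmap _ _).
- move=> a; apply: cone_hom_eq => /=; apply: ly_uniq; by rewrite DD00 addr0.
- move=> a b c h k; apply: cone_hom_eq => /=; apply: ly_uniq.
  rewrite -DDD addrA -!ly_spec // ?ss_spec; [exact: hom_eq | exact: hom_eq].
Defined.


Definition psi_val (c : dgC R12) := ly (ss (f0 f c)) c 0.

Lemma psi_spec c : c = ss (f0 f c) + DD 0 (psi_val c).
Proof. by apply: ly_spec; rewrite ss_spec dgd0 addr0. Qed.

Lemma Hob_proof (c : dgC R12) : f0 g c == f0 g (ss (f0 f c)) + dgd R2 (psi_val c).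
Proof. by apply/eqP; rewrite {1}(psi_spec c) rmorphD g0DD. Qed.

Definition Hob (c : ob (cone R12)) : graph_ob Phi :=
  @GOb _ _ Phi (f0 f c) (f0 g c)
    (exist (fun v : dgI R2 => f0 g c == f0 g (ss (f0 f c)) + dgd R2 v) _ (Hob_proof c))
    (cone_iso _).

Lemma Hsq (c c' : ob (cone R12)) (x : Defs.hom (cone R12) c c') :
  Defs.comp (C := cone R2) (cone_fmap g x) (gpsi (Hob c))
  = Defs.comp (gpsi (Hob c')) (fmap Phi (cone_fmap f x)).
Proof.
apply: cone_hom_eq => /=.
set phi := ly _ _ _.
have eph : ss (f0 f c') = ss (f0 f c) + DD (f1 f (proj1_sig x)) phi.
  apply: ly_spec; rewrite !ss_spec.
  by rewrite f_d -rmorphD; congr (f0 f _); exact: hom_eq.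
apply: (@DD_U2 (f1 f (proj1_sig x))); apply: (@addrI _ (ss (f0 f c))).
have ex : dgd R12 (proj1_sig x) = DD (f1 f (proj1_sig x)) (f1 g (proj1_sig x)).
  by rewrite /DD ee_uniq.
have R' : DD (f1 f (proj1_sig x)) (phi + psi_val c')
    = DD (f1 f (proj1_sig x)) phi + DD 0 (psi_val c') by rewrite DDD addr0.
have L' : DD (f1 f (proj1_sig x)) (psi_val c + f1 g (proj1_sig x))
    = DD 0 (psi_val c) + DD (f1 f (proj1_sig x)) (f1 g (proj1_sig x)) by rewrite DDD add0r.
rewrite L' R' -ex addrA -psi_spec -(hom_eq x) addrA -eph -psi_spec //.
Qed.


Definition Hfmap (c c' : ob (cone R12)) (x : Defs.hom (cone R12) c c')
  : Defs.hom (graph Phi) (Hob c) (Hob c') :=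
  @GHom _ _ Phi (Hob c) (Hob c') (cone_fmap f x) (cone_fmap g x) (Hsq x).

Definition Hfun : functor (cone R12) (graph Phi).
Proof.
refine (@Functor (cone R12) (graph Phi) Hob Hfmap _ _).
- by move=> a; apply: graph_hom_eq; apply: cone_hom_eq; rewrite /= f1_0.
- by move=> a b c h k; apply: graph_hom_eq; apply: cone_hom_eq; rewrite /= f1D.
Defined.


Definition Kob (o : graph_ob Phi) : dgC R12 := ss (go1 o) + DD 0 (proj1_sig (gpsi o)).

Lemma Kproof (o o' : graph_ob Phi) (m : graph_hom o o') :
  Kob o' == Kob o + dgd R12 (ee (proj1_sig (gh1 m)) (proj1_sig (gh2 m))).
Proof.
apply/eqP; rewrite /Kob -/(DD _ _).
have eph : ss (go1 o') = ss (go1 o) + DD (proj1_sig (gh1 m)) (proj1_sig (fmap Phi (gh1 m))).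
  by apply: ly_spec; rewrite !ss_spec; exact: hom_eq.
have sq := gsq m.
rewrite eph -!addrA DDD addr0.
by rewrite DDD add0r sq.
Qed.

Definition Kfmap (o o' : ob (graph Phi)) (m : Defs.hom (graph Phi) o o')
  : Defs.hom (cone R12) (Kob o) (Kob o') :=
  exist (fun v : dgI R12 => Kob o' == Kob o + dgd R12 v) _ (Kproof m).

Definition Kfun : functor (graph Phi) (cone R12).
Proof.
refine (@Functor (graph Phi) (cone R12) Kob Kfmap _ _).
- by move=> a; apply: cone_hom_eq; rewrite /= ee00.
- by move=> a b c h k; apply: cone_hom_eq; rewrite /= eeD.
Defined.

Lemma forward_main : cat_admissible (cone_functor f) (cone_functor g).
Proof.
exists Phi, Hfun; split; last split.
- exists Kfun; split.
  + have eo c : fob (functor_comp Kfun Hfun) c = fob (functor_id _) c.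
      exact: (esym (psi_spec c)).
    apply: (@functor_eq _ _ _ _ eo) => a b h.
    by apply: cone_hom_eq; rewrite hcast_cone /= ee_uniq.
  + have e1 o : f0 f (Kob o) = go1 o by rewrite /Kob rmorphD f0DD dgd0 addr0 ss_spec.
    have eo o : fob (functor_comp Hfun Kfun) o = fob (functor_id _) o.
      apply: graph_ob_eq => /=.
      * exact: e1.
      * rewrite /Kob rmorphD g0DD; apply/esym; exact: hom_eq.
      * apply: ly_uniq; rewrite e1 //.
    apply: (@functor_eq _ _ _ _ eo) => a b h.
    have [q1 q2] := hcast_graph (eo a) (eo b) (fmap (functor_comp Hfun Kfun) h).
    have [s1 s2] := ee_spec (proj1_sig (gh1 h)) (proj1_sig (gh2 h)).
    by apply: graph_hom_eq; apply: cone_hom_eq; [rewrite q1 | rewrite q2].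
- have eo c : fob (functor_comp (graph_pr1 Phi) Hfun) c = fob (cone_functor f) c by [].
  apply: (@functor_eq _ _ _ _ eo) => a b h.
  by apply: cone_hom_eq; rewrite hcast_cone.
- have eo c : fob (functor_comp (graph_pr2 Phi) Hfun) c = fob (cone_functor g) c by [].
  apply: (@functor_eq _ _ _ _ eo) => a b h.
  by apply: cone_hom_eq; rewrite hcast_cone.
Qed.

End Fwd.


Theorem lemma4p7p1 (R1 R12 R2 : dgring) (f : dghom R12 R1) (g : dghom R12 R2) :
  dg_admissible f g <-> cat_admissible (cone_functor f) (cone_functor g).
Proof.
split.
- move=> Adm; exact: forward_main.
- case=> Phi [H [[K [KH HK]] [E1 E2]]]; exact: (backward KH HK E1 E2).
Qed.
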